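(* Let $X$ be a nonempty set and $S$ a regular semigroup. Then every one-to-one mapping $\phi':X\to E(S)$ can be extended to a skeleton mapping $\phi:\Gamma(X)\to E(S^1)$ (i.e. $x\phi=x\phi'$ for all $x\in X$).
   Context: Let $1$ be a symbol not in $X$. Elements of height $\ge 2$ are triples $g=(g^l,g^c,g^r)$; $\Gamma_0(X)=\{1\}$, $\Gamma_1(X)=X$, each $x\in X$ identified with $(1,x,1)$; for $i\ge 2$, $\Gamma_i(X)$ is the set of triples $g\in\Gamma_{i-1}(X)\times\Gamma_{i-2}(X)\times\Gamma_{i-1}(X)$ with $g^l\neq g^r$ and $g^c\in\{(g^l)^l,(g^l)^r\}\cap\{(g^r)^l,(g^r)^r\}$; $\Gamma(X)=\bigcup_{i\ge0}\Gamma_i(X)$. $S^1$ is $S$ with an identity adjoined if necessary; $E(\cdot)$ is the set of idempotents. For idempotents $e,f$ of a semigroup $R$, $S(e,f)=\{h\in E(R): fh=h=he,\ ehf=ef\}$. A skeleton mapping is a mapping $\phi:\Gamma(X)\to E(S^1)$ such that (i) $\phi|_X$ is one-to-one with $X\phi\subseteq E(S)$; (ii) $(1\phi)(g\phi)=g\phi=(g\phi)(1\phi)$ for all $g\in X$; (iii) $g\phi\in S\big((g^r\phi)(g^c\phi),(g^c\phi)(g^l\phi)\big)$ (in $S^1$) for all $g\in\Gamma_i(X)$, $i\ge2$. *)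

(* Defs.v *)
(* Terms over X: [One] is the symbol 1, [Atom x] is x (identified with (1,x,1)),
   [Node l c r] is a triple (l,c,r). *)
Inductive term (X : Type) : Type :=
| One : term X
| Atom : X -> term X
| Node : term X -> term X -> term X -> term X.
Arguments One {X}.
Arguments Atom {X} _.
Arguments Node {X} _ _ _.

(* left / right components; for x in X, x = (1,x,1) so x^l = x^r = 1 *)
Definition tl {X} (t : term X) : term X :=
  match t with Node l _ _ => l | _ => One end.
Definition tr {X} (t : term X) : term X :=
  match t with Node _ _ r => r | _ => One end.

Fixpoint Gamma {X : Type} (i : nat) (t : term X) {struct i} : Prop :=
  match i with
  | 0 => t = One
  | S 0 => exists x, t = Atom x
  | S ((S k) as k1) =>
      match t with
      | Node l c r =>
          Gamma k1 l /\ Gamma k c /\ Gamma k1 r /\ l <> r /\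
          (c = tl l \/ c = tr l) /\ (c = tl r \/ c = tr r)
      | _ => False
      end
  end.

Definition GammaAll {X : Type} (t : term X) : Prop := exists i, Gamma i t.

Definition associative {S : Type} (mul : S -> S -> S) : Prop :=
  forall a b c, mul a (mul b c) = mul (mul a b) c.

Definition regular {S : Type} (mul : S -> S -> S) : Prop :=
  forall a, exists x, mul (mul a x) a = a.

Definition has_identity {S : Type} (mul : S -> S -> S) : Prop :=
  exists e, forall a, mul e a = a /\ mul a e = a.

(* S^1 is modelled inside [option S], where [None] is an adjoined identity:
   multiplication on option S with None as identity. *)
Definition mul1 {S : Type} (mul : S -> S -> S) (u v : option S) : option S :=
  match u, v with
  | None, _ => v
  | _, None => u
  | Some a, Some b => Some (mul a b)
  end.

(* Carrier of S^1: all of option S if S has no identity; otherwise only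
   the elements of S (identity adjoined only if necessary). *)
Definition inS1 {S : Type} (mul : S -> S -> S) (u : option S) : Prop :=
  match u with Some _ => True | None => ~ has_identity mul end.

Definition idemS1 {S : Type} (mul : S -> S -> S) (u : option S) : Prop :=
  inS1 mul u /\ mul1 mul u u = u.

Definition idem {S : Type} (mul : S -> S -> S) (a : S) : Prop := mul a a = a.

Definition sandwich {S : Type} (mul : S -> S -> S) (e f h : option S) : Prop :=
  idemS1 mul h /\ mul1 mul f h = h /\ h = mul1 mul h e /\
  mul1 mul (mul1 mul e h) f = mul1 mul e f.

Definition skeleton {X S : Type} (mul : S -> S -> S) (phi : term X -> option S) : Prop :=
  (forall g, GammaAll g -> idemS1 mul (phi g)) /\
  (forall x y : X, phi (Atom x) = phi (Atom y) -> x = y) /\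
  (forall x : X, exists a, phi (Atom x) = Some a /\ idem mul a) /\
  (forall x : X, mul1 mul (phi One) (phi (Atom x)) = phi (Atom x) /\
                 phi (Atom x) = mul1 mul (phi (Atom x)) (phi One)) /\
  (forall i g, 2 <= i -> Gamma i g ->
     sandwich mul (mul1 mul (phi (tr g)) (phi (match g with Node _ c _ => c | _ => One end)))
                  (mul1 mul (phi (match g with Node _ c _ => c | _ => One end)) (phi (tl g)))
                  (phi g)).

(* Main.v *)
Require Import Defs.
From Stdlib Require Import Classical ClassicalEpsilon Lia Arith.

Lemma sub3 (M : Type) (m : M -> M -> M)
  (A : forall a b c, m a (m b c) = m (m a b) c) (p q r w : M) :
  m (m p q) r = w -> forall z, m (m (m z p) q) r = m z w.
Proof. intros H z. rewrite <- H. rewrite !A. reflexivity. Qed.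

Lemma sub2 (M : Type) (m : M -> M -> M)
  (A : forall a b c, m a (m b c) = m (m a b) c) (p q w : M) :
  m p q = w -> forall z, m (m z p) q = m z w.
Proof. intros H z. rewrite <- H. rewrite !A. reflexivity. Qed.

Lemma sand_gen (M : Type) (m : M -> M -> M)
  (A : forall a b c, m a (m b c) = m (m a b) c)
  (e f x : M) (he : m e e = e) (hf : m f f = f)
  (hx : m (m (m e f) x) (m e f) = m e f) :
  let a := m e f in let y := m (m x a) x in let h := m (m f y) e in
  m h h = h /\ m f h = h /\ m h e = h /\ m (m e h) f = m e f.
Proof.
  intros a y h.
  assert (hx3 := sub3 M m A _ _ _ _ hx). fold a in hx, hx3.
  assert (he2 := sub2 M m A _ _ _ he). assert (hf2 := sub2 M m A _ _ _ hf).
  assert (Hy : m (m y a) y = y).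
  { unfold y. rewrite !A. rewrite hx3. rewrite hx3. reflexivity. }
  assert (Hy3 := sub3 M m A _ _ _ _ Hy).
  assert (Ha : m (m a y) a = a).
  { unfold y. rewrite !A. rewrite hx. rewrite hx. reflexivity. }
  unfold h. split; [|split; [|split]].
  - rewrite !A. rewrite <- (A (m f y) e f). change (m e f) with a. rewrite Hy3. reflexivity.
  - rewrite !A. rewrite hf. reflexivity.
  - rewrite <- (A (m f y) e e), he. reflexivity.
  - rewrite !A. change (m e f) with a. rewrite <- (A (m a y) e f). change (m e f) with a. exact Ha.

Qed.

Lemma inv_gen (M : Type) (m : M -> M -> M)
  (A : forall a b c, m a (m b c) = m (m a b) c) (h R C L : M) :
  m h h = h -> m h (m R C) = h -> m (m C L) h = h ->
  m (m (m R C) h) (m C L) = m (m R C) (m C L) -> m C C = C ->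
  m (m h L) h = h /\ m (m h R) h = h.
Proof.
  intros hh hE hF hEF hC.
  assert (K : m (m h (m (m (m R C) h) (m C L))) h = h).
  { rewrite (A h (m (m R C) h) (m C L)), (A h (m R C) h), hE, hh.
    rewrite <- (A h (m C L) h), hF, hh. reflexivity. }
  rewrite hEF in K.
  assert (HL : m (m h L) h = h).
  { transitivity (m (m h (m (m R C) (m C L))) h); [| exact K].
    rewrite (A h (m R C) (m C L)), hE, (A h C L).
    assert (hc : m h C = h) by (rewrite <- hE at 1; rewrite <- (A h (m R C) C), <- (A R C C), hC; exact hE).
    rewrite hc. reflexivity. }
  split; [exact HL|].
  rewrite <- hF at 2. rewrite (A (m h R) (m C L) h). rewrite (A (m h R) C L).
  rewrite <- (A h R C), hE. exact HL.
Qed.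

Lemma mul1_assoc (S : Type) (mul : S -> S -> S) (hassoc : associative mul) :
  forall a b c : option S, mul1 mul a (mul1 mul b c) = mul1 mul (mul1 mul a b) c.
Proof.
  intros [a|] [b|] [c|]; simpl; try reflexivity. rewrite hassoc; reflexivity.
Qed.

Fixpoint phiF {X S : Type} (mul : S -> S -> S) (eps : option S)
  (inv1 : option S -> option S) (phi' : X -> S) (t : term X) : option S :=
  match t with
  | One => eps
  | Atom x => Some (phi' x)
  | Node l c r =>
      let E := mul1 mul (phiF mul eps inv1 phi' r) (phiF mul eps inv1 phi' c) in
      let F := mul1 mul (phiF mul eps inv1 phi' c) (phiF mul eps inv1 phi' l) in
      let a := mul1 mul E F in
      let y := mul1 mul (mul1 mul (inv1 a) a) (inv1 a) in
      mul1 mul (mul1 mul F y) E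
  end.

Lemma mul1_Some_r (S : Type) (mul : S -> S -> S) u a :
  exists b, mul1 mul u (Some a) = Some b.
Proof. destruct u; simpl; eauto. Qed.

Lemma mul1_Some_l (S : Type) (mul : S -> S -> S) u a :
  exists b, mul1 mul (Some a) u = Some b.
Proof. destruct u; simpl; eauto. Qed.

Lemma main_inv (X S : Type) (mul : S -> S -> S) (hassoc : associative mul)
  (eps : option S) (inv1 : option S -> option S) (phi' : X -> S)
  (hidem : forall x, idem mul (phi' x))
  (heps : mul1 mul eps eps = eps)
  (hepsid : forall a, mul1 mul eps (Some a) = Some a /\ mul1 mul (Some a) eps = Some a)
  (hinv : forall u, mul1 mul (mul1 mul u (inv1 u)) u = u) :
  forall n i t, i <= n -> Gamma i t ->
    (1 <= i -> exists a, phiF mul eps inv1 phi' t = Some a) /\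
    mul1 mul (phiF mul eps inv1 phi' t) (phiF mul eps inv1 phi' t) = phiF mul eps inv1 phi' t /\
    (forall d, d = tl t \/ d = tr t ->
       mul1 mul (mul1 mul (phiF mul eps inv1 phi' t) (phiF mul eps inv1 phi' d))
                (phiF mul eps inv1 phi' t) = phiF mul eps inv1 phi' t).
Proof.
  pose proof (mul1_assoc S mul hassoc) as A. unfold idem in hidem.
  set (P := phiF mul eps inv1 phi').
  induction n as [|n IH]; intros i t hi hG.
  - assert (i = 0) by lia. subst i. simpl in hG. subst t.
    split; [intros; lia|]. split; [exact heps|].
    intros d [-> | ->]; cbn [tl tr]; unfold P; cbn [phiF]; rewrite heps; exact heps.
  - destruct i as [|[|k]].
    + apply (IH 0 t); [lia|exact hG].
    + simpl in hG. destruct hG as [x ->].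
      split; [intros _; exists (phi' x); reflexivity|].
      split; [unfold P; cbn [phiF mul1]; rewrite (hidem x); reflexivity|].
      intros d [-> | ->]; [change (P (tl (Atom x))) with eps | change (P (tr (Atom x))) with eps];
        change (P (Atom x)) with (Some (phi' x)); rewrite (proj2 (hepsid _)); cbn [mul1]; rewrite (hidem x); reflexivity.
    + destruct t as [| x | l c r]; simpl in hG; try contradiction.
      destruct hG as (Gl & Gc & Gr & _ & Hcl & Hcr).
      destruct (IH (Nat.succ k) l (le_S_n _ _ hi) Gl) as (Sl & Il & Dl).
      destruct (IH k c (Nat.le_trans _ _ _ (Nat.le_succ_diag_r k) (le_S_n _ _ hi)) Gc) as (_ & Ic & _).
      destruct (IH (Nat.succ k) r (le_S_n _ _ hi) Gr) as (Sr & Ir & Dr).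
      fold P in Sl, Il, Dl, Ic, Sr, Ir, Dr.
      assert (HE : mul1 mul (mul1 mul (P r) (P c)) (mul1 mul (P r) (P c)) = mul1 mul (P r) (P c)).
      { rewrite (A (mul1 mul (P r) (P c)) (P r) (P c)), (Dr c Hcr). reflexivity. }
      assert (HF : mul1 mul (mul1 mul (P c) (P l)) (mul1 mul (P c) (P l)) = mul1 mul (P c) (P l)).
      { rewrite (A (mul1 mul (P c) (P l)) (P c) (P l)), <- (A (P c) (P l) (P c)), <- (A (P c) (mul1 mul (P l) (P c)) (P l)), (Dl c Hcl). reflexivity. }
      pose proof (sand_gen _ _ A _ _ (inv1 (mul1 mul (mul1 mul (P r) (P c)) (mul1 mul (P c) (P l)))) HE HF (hinv _))
        as (h1 & h2 & h3 & h4).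
      change (phiF mul eps inv1 phi' (Node l c r)) with (P (Node l c r)).
      assert (Heq : P (Node l c r) = 
        mul1 mul (mul1 mul (mul1 mul (P c) (P l))
          (mul1 mul (mul1 mul (inv1 (mul1 mul (mul1 mul (P r) (P c)) (mul1 mul (P c) (P l))))
                (mul1 mul (mul1 mul (P r) (P c)) (mul1 mul (P c) (P l))))
                (inv1 (mul1 mul (mul1 mul (P r) (P c)) (mul1 mul (P c) (P l))))))
          (mul1 mul (P r) (P c))) by reflexivity.
      rewrite Heq. clear Heq.
      set (h := mul1 mul (mul1 mul (mul1 mul (P c) (P l))
          (mul1 mul (mul1 mul (inv1 (mul1 mul (mul1 mul (P r) (P c)) (mul1 mul (P c) (P l))))
                (mul1 mul (mul1 mul (P r) (P c)) (mul1 mul (P c) (P l))))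
                (inv1 (mul1 mul (mul1 mul (P r) (P c)) (mul1 mul (P c) (P l))))))
          (mul1 mul (P r) (P c))) in *.
      split.
      { intros _. destruct (Sr (le_n_S _ _ (Nat.le_0_l k))) as [b Hb]. unfold h. rewrite Hb.
        destruct (mul1_Some_l S mul (P c) b) as [b' ->]. apply mul1_Some_r. }
      split; [exact h1|].
      destruct (inv_gen _ _ A h (P r) (P c) (P l) h1 h3 h2 h4 Ic) as [K1 K2].
      intros d [-> | ->]; simpl; assumption.
Qed.

Theorem lemma5p3 (X : Type) (S : Type) (mul : S -> S -> S)
  (hX : inhabited X) (hassoc : associative mul) (hreg : regular mul)
  (phi' : X -> S)
  (hinj : forall x y, phi' x = phi' y -> x = y)
  (hidem : forall x, idem mul (phi' x)) :
  exists phi : term X -> option S,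
    skeleton mul phi /\ (forall x, phi (Atom x) = Some (phi' x)).
Proof.
  pose proof (mul1_assoc S mul hassoc) as A.
  assert (Heps : exists eps : option S, inS1 mul eps /\ mul1 mul eps eps = eps /\
     forall a, mul1 mul eps (Some a) = Some a /\ mul1 mul (Some a) eps = Some a).
  { destruct (classic (has_identity mul)) as [[e He] | Hn].
    - exists (Some e). simpl. split; [exact I|]. split; [f_equal; apply He|].
      intro a; split; f_equal; apply He.
    - exists None. simpl. split; [exact Hn|]. split; [reflexivity|]. intro a; split; reflexivity. }
  destruct Heps as (eps & eS & eI & eId).
  set (inv := fun a => proj1_sig (constructive_indefinite_description _ (hreg a))).
  assert (hinvS : forall a, mul (mul a (inv a)) a = a).
  { intro a. unfold inv. destruct (constructive_indefinite_description _ (hreg a)) as [x Hx]. simpl. exact Hx. }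
  set (inv1 := fun u : option S => match u with Some a => Some (inv a) | None => None end).
  assert (hinv : forall u, mul1 mul (mul1 mul u (inv1 u)) u = u).
  { intros [a|]; simpl; [rewrite hinvS|]; reflexivity. }
  pose proof (main_inv X S mul hassoc eps inv1 phi' hidem eI eId hinv) as MI.
  set (P := phiF mul eps inv1 phi').
  exists P. split; [| intro; reflexivity].
  unfold skeleton. split; [|split; [|split; [|split]]].
  - intros g [i Gi]. destruct (MI i i g (le_n i) Gi) as (Sg & Ig & _). split; [|exact Ig].
    destruct i.
    + simpl in Gi; subst g; exact eS.
    + destruct (Sg (le_n_S _ _ (Nat.le_0_l i))) as [a Ha]. fold P in Ha. rewrite Ha. exact I.
  - intros x y H. simpl in H. injection H. apply hinj.
  - intros x. exists (phi' x). split; [reflexivity| apply hidem].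
  - intros x. change (P (Atom x)) with (Some (phi' x)).
    destruct (eId (phi' x)) as [h1 h2]. change (P One) with eps. rewrite h1, h2. split; reflexivity.
  - intros i g hi Gi. destruct i as [|[|k]].
    + exfalso; exact (Nat.nle_succ_0 _ hi).
    + exfalso; apply le_S_n in hi; exact (Nat.nle_succ_0 _ hi).
    + destruct (MI _ _ g (le_n _) Gi) as (Sg & _ & _).
      destruct g as [| x | l c r]; simpl in Gi; try contradiction.
      destruct Gi as (Gl & Gc & Gr & _ & Hcl & Hcr).
      destruct (MI (Nat.succ k) (Nat.succ k) l (le_n _) Gl) as (Sl & Il & Dl).
      destruct (MI k k c (le_n _) Gc) as (_ & Ic & _).
      destruct (MI (Nat.succ k) (Nat.succ k) r (le_n _) Gr) as (Sr & Ir & Dr).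
      fold P in Sl, Il, Dl, Ic, Sr, Ir, Dr, Sg.
      change (sandwich mul (mul1 mul (P r) (P c)) (mul1 mul (P c) (P l)) (P (Node l c r))).
      assert (HE : mul1 mul (mul1 mul (P r) (P c)) (mul1 mul (P r) (P c)) = mul1 mul (P r) (P c)).
      { rewrite (A (mul1 mul (P r) (P c)) (P r) (P c)), (Dr c Hcr). reflexivity. }
      assert (HF : mul1 mul (mul1 mul (P c) (P l)) (mul1 mul (P c) (P l)) = mul1 mul (P c) (P l)).
      { rewrite (A (mul1 mul (P c) (P l)) (P c) (P l)), <- (A (P c) (P l) (P c)), <- (A (P c) (mul1 mul (P l) (P c)) (P l)), (Dl c Hcl). reflexivity. }
      pose proof (sand_gen _ _ A _ _ (inv1 (mul1 mul (mul1 mul (P r) (P c)) (mul1 mul (P c) (P l)))) HE HF (hinv _))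
        as (h1 & h2 & h3 & h4).
      destruct (Sg (le_n_S _ _ (Nat.le_0_l _))) as [b Hb].
      assert (Heq : P (Node l c r) = 
        mul1 mul (mul1 mul (mul1 mul (P c) (P l))
          (mul1 mul (mul1 mul (inv1 (mul1 mul (mul1 mul (P r) (P c)) (mul1 mul (P c) (P l))))
                (mul1 mul (mul1 mul (P r) (P c)) (mul1 mul (P c) (P l))))
                (inv1 (mul1 mul (mul1 mul (P r) (P c)) (mul1 mul (P c) (P l))))))
          (mul1 mul (P r) (P c))) by reflexivity.
      unfold sandwich, idemS1.
      split; [split|].
      * rewrite Hb. exact I.
      * rewrite Heq. exact h1.
      * rewrite Heq. split; [exact h2|]. split; [symmetry; exact h3| exact h4].
Qed.
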